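(* Let $a<b$, $c<d$ and $C\in\mathbb{R}\setminus\{0\}$. Let $(p_n)_{n\ge0}$, $(q_n)_{n\ge0}$ be real sequences with $p_0=q_0$ such that $\sigma(s)=\sum_{n\ge0}p_n(s-a)^n$ and $\tau(t)=\sum_{n\ge0}q_n(t-c)^n$ converge uniformly on $[a,b]$ and $[c,d]$ respectively. Let $k$ be the solution of the Goursat problem $\partial^2k/\partial s\partial t=Ck$ on $[a,b]\times[c,d]$ with $k(s,c)=\sigma(s)$, $k(a,t)=\tau(t)$. Then for all $(s,t)\in[a,b]\times[c,d]$, $$k(s,t)=\sum_{n=1}^\infty\sum_{m=0}^\infty p_n\frac{[C(t-c)]^m(s-a)^{n+m}}{m!}\frac{n!}{(n+m)!}+\sum_{n=0}^\infty\sum_{m=0}^\infty q_n\frac{[C(s-a)]^m(t-c)^{n+m}}{m!}\frac{n!}{(n+m)!},$$ or equivalently $$k(s,t)=\sum_{n=0}^\infty\sum_{m=0}^\infty p_n\frac{[C(t-c)]^m(s-a)^{n+m}}{m!}\frac{n!}{(n+m)!}+\sum_{n=1}^\infty\sum_{m=0}^\infty q_n\frac{[C(s-a)]^m(t-c)^{n+m}}{m!}\frac{n!}{(n+m)!}.$$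
   Context: The solution of the Goursat problem is the continuous function $k$ on $[a,b]\times[c,d]$ with $k(s,t)=\sigma(s)+\tau(t)-\sigma(a)+C\int_a^s\int_c^t k(r,w)\,dw\,dr$ (equivalently, the classical solution given by the Riemann-function representation with the zero-order modified Bessel function $I_0$). *)

(* Defs.v *)
From Stdlib Require Import Reals Arith.
From Coquelicot Require Import Coquelicot.
Open Scope R_scope.

Definition pser_partial (p : nat -> R) (x0 : R) (N : nat) (x : R) : R :=
  sum_f_R0 (fun n => p n * (x - x0) ^ n) N.

Definition unif_cv_on (u : nat -> R -> R) (f : R -> R) (lo hi : R) : Prop :=
  forall eps : R, 0 < eps -> exists N : nat, forall (n : nat) (x : R),
    (N <= n)%nat -> lo <= x <= hi -> Rabs (u n x - f x) < eps.

Definition cont_on_rect (k : R -> R -> R) (a b c d : R) : Prop :=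
  forall s t, a <= s <= b -> c <= t <= d ->
  forall eps : R, 0 < eps -> exists delta : R, 0 < delta /\
    forall s' t', a <= s' <= b -> c <= t' <= d ->
      Rabs (s' - s) < delta -> Rabs (t' - t) < delta ->
      Rabs (k s' t' - k s t) < eps.

Definition gterm (p : nat -> R) (C x y : R) (n m : nat) : R :=
  p n * (C * y) ^ m * x ^ (n + m) / INR (fact m) * INR (fact n) / INR (fact (n + m)).

(* Main.v *)
Require Import Defs.
From Stdlib Require Import Reals Arith Lra Lia.
From Coquelicot Require Import Coquelicot.
Open Scope R_scope.

Fixpoint lsum (f : nat -> R) (N : nat) : R :=
  match N with O => 0 | S N => lsum f N + f N end.

Lemma lsum_sum_f (f : nat -> R) n : sum_f_R0 f n = lsum f (S n).
Proof. induction n; simpl in *; [lra|rewrite IHn; ring]. Qed.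

Lemma lsum_ext f g N : (forall n, (n < N)%nat -> f n = g n) -> lsum f N = lsum g N.
Proof. induction N; intros H; simpl; auto. rewrite IHN, H; auto. Qed.

Lemma exp_series (z : R) : ex_series (fun m => z ^ m / INR (fact m)).
Proof.
  eexists. eapply is_series_ext; [|apply (is_exp_Reals z)].
  intros n; simpl. rewrite pow_n_pow. unfold scal; simpl; unfold mult; simpl.
  unfold Rdiv; ring.
Qed.

Lemma ex_series_le_R (a b : nat -> R) :
  (forall n, Rabs (a n) <= b n) -> ex_series b -> ex_series a.
Proof. intros H Hb. apply (@ex_series_le R_AbsRing R_CompleteNormedModule a b); auto. Qed.

Lemma is_series_zero : is_series (fun _ : nat => 0) 0.
Proof.
  apply is_series_Reals. intros e He. exists O. intros n _.
  unfold R_dist. rewrite lsum_sum_f. replace (lsum (fun _ => 0) (S n)) with 0.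
  rewrite Rminus_0_r, Rabs_R0; auto.
  induction (S n); simpl; auto. rewrite <- IHn0; ring.
Qed.

Lemma Series_zero : Series (fun _ : nat => 0) = 0.
Proof. apply is_series_unique, is_series_zero. Qed.

Lemma ex_series_lsum (a : nat -> nat -> R) N :
  (forall n, ex_series (a n)) -> ex_series (fun m => lsum (fun n => a n m) N)
  /\ Series (fun m => lsum (fun n => a n m) N) = lsum (fun n => Series (a n)) N.
Proof.
  intros H; induction N; simpl.
  - split. exists 0. apply is_series_zero. apply Series_zero.
  - destruct IHN as [H1 H2]. split.
    + apply (ex_series_plus _ _ H1 (H N)).
    + rewrite Series_plus; auto. rewrite H2; auto.
Qed.

Lemma swap_lemma (a : nat -> nat -> R) (G w : nat -> R) :
  (forall n, ex_series (a n)) -> ex_series w ->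
  (forall eps, 0 < eps -> exists N0, forall N m, (N0 <= N)%nat ->
      Rabs (G m - lsum (fun n => a n m) N) <= eps * w m) ->
  ex_series G /\ is_series (fun n => Series (a n)) (Series G).
Proof.
  intros Ha Hw Happ.
  assert (Hw0 : forall m, 0 <= w m).
  { intros m. destruct (Happ 1 Rlt_0_1) as [N0 HN].
    specialize (HN N0 m (le_n _)). pose proof (Rabs_pos (G m - lsum (fun n : nat => a n m) N0)). lra. }
  assert (HG : ex_series G).
  { destruct (Happ 1 Rlt_0_1) as [N0 HN].
    destruct (ex_series_lsum a N0 Ha) as [H1 _].
    assert (H2 : ex_series (fun m => G m - lsum (fun n => a n m) N0)).
    { apply ex_series_le_R with (b := w); auto. intros m. rewrite <- Rmult_1_l. apply HN; auto. }
    eapply ex_series_ext; [|apply (ex_series_plus _ _ H2 H1)].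
    intros m; simpl. unfold plus; simpl; ring. }
  split; auto.
  apply is_series_Reals. intros eps Heps.
  set (W := Series w).
  assert (HW : 0 <= W). { unfold W. rewrite <- Series_zero. apply Series_le; auto. intros; split; [lra|auto]. }
  destruct (Happ (eps / (W + 1))) as [N0 HN].
  { apply Rdiv_lt_0_compat; lra. }
  exists N0. intros n Hn. unfold R_dist. rewrite lsum_sum_f.
  destruct (ex_series_lsum a (S n) Ha) as [H1 H2]. rewrite <- H2.
  rewrite <- Series_minus by auto.
  assert (Hab : ex_series (fun m => Rabs (lsum (fun n0 => a n0 m) (S n) - G m))).
  { apply ex_series_le_R with (b := fun m => eps / (W+1) * w m).
    intros m. rewrite Rabs_Rabsolu, Rabs_minus_sym. apply HN. lia.
    apply (ex_series_scal_l (eps / (W+1)) w Hw). }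
  eapply Rle_lt_trans. apply Series_Rabs; auto.
  eapply Rle_lt_trans. apply Series_le with (b := fun m => eps / (W+1) * w m).
  intros m; split. apply Rabs_pos. rewrite Rabs_minus_sym. apply HN; lia.
  apply (ex_series_scal_l (eps / (W+1)) w Hw).
  rewrite Series_scal_l. fold W.
  apply Rlt_le_trans with (eps / (W + 1) * (W + 1)).
  apply Rmult_lt_compat_l. apply Rdiv_lt_0_compat; lra. lra.
  right; field; lra.
Qed.

Lemma cont_of_deriv (f : R -> R) x : ex_derive f x -> continuous f x.
Proof. apply (@ex_derive_continuous R_AbsRing R_NormedModule). Qed.

Lemma is_RInt_mono (c t : R) (j : nat) :
  is_RInt (fun w => (w - c) ^ j) c t ((t - c) ^ (S j) / INR (S j)).
Proof.
  assert (HS : INR (S j) <> 0) by (apply not_0_INR; lia).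
  replace ((t - c) ^ (S j) / INR (S j)) with
    (minus ((fun w => (w - c) ^ (S j) / INR (S j)) t) ((fun w => (w - c) ^ (S j) / INR (S j)) c)).
  2:{ unfold minus, plus, opp; simpl. replace (c - c) with 0 by ring. field. auto. }
  apply (@is_RInt_derive R_CompleteNormedModule (fun w => (w - c) ^ (S j) / INR (S j))).
  - intros x _. auto_derive; auto. change (match j with 0%nat => 1 | S _ => INR j + 1 end) with (INR (S j)). unfold Rminus. field. auto.
  - intros y _. apply cont_of_deriv. auto_derive. auto.
Qed.

Lemma is_RInt_cmono (K c t : R) (j : nat) :
  is_RInt (fun w => K * (w - c) ^ j) c t (K * ((t - c) ^ (S j) / INR (S j))).
Proof. apply (is_RInt_scal _ _ _ K _ (is_RInt_mono c t j)). Qed.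

Lemma abs_RInt_le_fun (f g : R -> R) (lo hi G : R) :
  lo <= hi -> ex_RInt f lo hi -> is_RInt g lo hi G ->
  (forall x, lo <= x <= hi -> Rabs (f x) <= g x) -> Rabs (RInt f lo hi) <= G.
Proof.
  intros Hle Hf Hg H.
  assert (Hg' : ex_RInt g lo hi) by (exists G; auto).
  assert (Hng : is_RInt (fun x => - g x) lo hi (- G)) by apply (is_RInt_opp _ _ _ _ Hg).
  apply Rabs_le; split.
  - rewrite <- (is_RInt_unique _ _ _ _ Hng). apply RInt_le; auto. exists (-G); auto.
    intros x Hx. specialize (H x ltac:(lra)). apply Rabs_le_between in H; lra.
  - rewrite <- (is_RInt_unique _ _ _ _ Hg). apply RInt_le; auto.
    intros x Hx. specialize (H x ltac:(lra)). apply Rabs_le_between in H; lra.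
Qed.

Lemma bound_lemma (u : R -> R -> R) a s c t B m :
  a <= s -> c <= t ->
  (forall r, a <= r <= s -> ex_RInt (u r) c t) ->
  ex_RInt (fun r => RInt (u r) c t) a s ->
  (forall r w, a <= r <= s -> c <= w <= t -> Rabs (u r w) <= B * (r - a) ^ m * (w - c) ^ m) ->
  Rabs (RInt (fun r => RInt (u r) c t) a s) <=
    B * ((s - a) ^ (S m) / INR (S m)) * ((t - c) ^ (S m) / INR (S m)).
Proof.
  intros Has Hct Hin Hout Hb.
  replace (B * ((s - a) ^ (S m) / INR (S m)) * ((t - c) ^ (S m) / INR (S m)))
    with ((B * ((t - c) ^ (S m) / INR (S m))) * ((s - a) ^ (S m) / INR (S m))) by ring.
  apply abs_RInt_le_fun with (g := fun r => (B * ((t - c) ^ (S m) / INR (S m))) * (r - a) ^ m); auto.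
  apply is_RInt_cmono.
  intros r Hr.
  replace (B * ((t - c) ^ S m / INR (S m)) * (r - a) ^ m) with
    ((B * (r - a) ^ m) * ((t - c) ^ S m / INR (S m))) by ring.
  apply abs_RInt_le_fun with (g := fun w => (B * (r - a) ^ m) * (w - c) ^ m); auto.
  apply is_RInt_cmono.
Qed.

Lemma RInt_minus_R (f g : R -> R) lo hi : ex_RInt f lo hi -> ex_RInt g lo hi ->
  RInt (fun x => f x - g x) lo hi = RInt f lo hi - RInt g lo hi.
Proof. intros; apply (@RInt_minus R_CompleteNormedModule); auto. Qed.
Lemma RInt_plus_R (f g : R -> R) lo hi : ex_RInt f lo hi -> ex_RInt g lo hi ->
  RInt (fun x => f x + g x) lo hi = RInt f lo hi + RInt g lo hi.
Proof. intros; apply (@RInt_plus R_CompleteNormedModule); auto. Qed.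
Lemma ex_RInt_minus_R (f g : R -> R) lo hi : ex_RInt f lo hi -> ex_RInt g lo hi ->
  ex_RInt (fun x => f x - g x) lo hi.
Proof. intros; apply (@ex_RInt_minus R_NormedModule); auto. Qed.
Lemma ex_RInt_plus_R (f g : R -> R) lo hi : ex_RInt f lo hi -> ex_RInt g lo hi ->
  ex_RInt (fun x => f x + g x) lo hi.
Proof. intros; apply (@ex_RInt_plus R_NormedModule); auto. Qed.
Lemma RInt_Chasles_R (f : R -> R) x y z : ex_RInt f x y -> ex_RInt f y z ->
  RInt f x y + RInt f y z = RInt f x z.
Proof. intros; apply (@RInt_Chasles R_CompleteNormedModule); auto. Qed.
Lemma RInt_swap_R (f : R -> R) x y : ex_RInt f x y -> RInt f y x = - RInt f x y.
Proof. intros H. rewrite <- (@opp_RInt_swap R_CompleteNormedModule f x y H). reflexivity. Qed.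

Lemma abs_RInt_le_const' (f : R -> R) x y M :
  ex_RInt f x y -> (forall z, Rmin x y <= z <= Rmax x y -> Rabs (f z) <= M) ->
  Rabs (RInt f x y) <= Rabs (y - x) * M.
Proof.
  intros Hf H. destruct (Rle_dec x y) as [Hxy|Hxy].
  - rewrite (Rabs_right (y - x)) by lra. apply abs_RInt_le_const; auto.
    intros z Hz; apply H. rewrite Rmin_left, Rmax_right; lra.
  - rewrite (RInt_swap_R f y x) by (apply ex_RInt_swap; auto). rewrite Rabs_Ropp, (Rabs_left (y - x)) by lra.
    replace (- (y - x)) with (x - y) by ring.
    apply abs_RInt_le_const; auto. lra. apply ex_RInt_swap; auto.
    intros z Hz; apply H. rewrite Rmin_right, Rmax_left; lra.
Qed.

Definition UC1 (lo hi : R) (g : R -> R) : Prop :=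
  forall eps, 0 < eps -> exists delta, 0 < delta /\
    forall x u, lo <= x <= hi -> lo <= u <= hi -> Rabs (u - x) < delta -> Rabs (g u - g x) < eps.

Definition UC2 (a b c d : R) (h : R -> R -> R) : Prop :=
  forall eps, 0 < eps -> exists delta, 0 < delta /\
    forall x y u v, a <= x <= b -> c <= y <= d -> a <= u <= b -> c <= v <= d ->
      Rabs (u - x) < delta -> Rabs (v - y) < delta -> Rabs (h u v - h x y) < eps.

Definition clamp (lo hi x : R) := Rmax lo (Rmin hi x).

Lemma clamp_in lo hi x : lo <= hi -> lo <= clamp lo hi x <= hi.
Proof. intros H. unfold clamp. split. apply Rmax_l. apply Rmax_lub; auto. apply Rmin_l. Qed.

Lemma clamp_id lo hi x : lo <= x <= hi -> clamp lo hi x = x.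
Proof. intros H. unfold clamp. rewrite Rmin_right by lra. rewrite Rmax_right by lra. auto. Qed.

Lemma clamp_lip lo hi x u : lo <= hi -> Rabs (clamp lo hi u - clamp lo hi x) <= Rabs (u - x).
Proof.
  intros H. unfold clamp, Rmax, Rmin.
  repeat (destruct Rle_dec); repeat (destruct Rle_dec); apply Rabs_le; split;
  try (pose proof (Rabs_pos (u - x))); try lra;
  try (pose proof (Rle_abs (u - x))); try (pose proof (Rle_abs (-(u - x)))); try rewrite Rabs_Ropp in *; lra.
Qed.

Lemma UC1_cont lo hi g x : lo <= hi -> UC1 lo hi g -> continuous (fun z => g (clamp lo hi z)) x.
Proof.
  intros Hlh H. apply (proj1 (continuity_pt_filterlim _ _)).
  intros eps Heps. destruct (H eps Heps) as [dl [Hdl Hd]].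
  exists dl; split; auto. intros z [_ Hz]. simpl in *. unfold R_dist in *.
  apply Hd; try apply clamp_in; auto. eapply Rle_lt_trans; [apply clamp_lip|]; auto.
Qed.

Lemma UC1_ex_RInt lo hi g al be : lo <= hi -> UC1 lo hi g -> lo <= al <= hi -> lo <= be <= hi ->
  ex_RInt g al be.
Proof.
  intros Hlh H Ha Hb.
  apply (@ex_RInt_ext R_NormedModule (fun z => g (clamp lo hi z))).
  - intros x Hx. rewrite clamp_id; auto.
    split. apply Rle_trans with (Rmin al be). apply Rmin_glb; lra. lra.
    apply Rle_trans with (Rmax al be). lra. apply Rmax_lub; lra.
  - apply (@ex_RInt_continuous R_CompleteNormedModule). intros; apply UC1_cont; auto.
Qed.

Lemma UC2_slice a b c d h r : UC2 a b c d h -> a <= r <= b -> UC1 c d (h r).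
Proof.
  intros H Hr eps Heps. destruct (H eps Heps) as [dl [Hdl Hd]]. exists dl; split; auto.
  intros x u Hx Hu Hxu. apply Hd; auto. rewrite Rminus_diag, Rabs_R0; auto.
Qed.

Lemma UC2_bounded a b c d h : a <= b -> c <= d -> UC2 a b c d h ->
  exists M, 0 <= M /\ forall r w, a <= r <= b -> c <= w <= d -> Rabs (h r w) <= M.
Proof.
  intros Hab Hcd H. destruct (H 1 Rlt_0_1) as [dl [Hdl Hd]].
  destruct (archimed_cor1 (dl / (b - a + (d - c) + 1))) as [N [HN HN0]].
  { apply Rdiv_lt_0_compat; lra. }
  assert (HNp : 0 < INR N) by (apply lt_0_INR; auto).
  exists (Rabs (h a c) + INR N). split. pose proof (Rabs_pos (h a c)); pose proof (pos_INR N); lra.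
  intros x y Hx Hy.
  set (px i := a + INR i * ((x - a) / INR N)).
  set (py i := c + INR i * ((y - c) / INR N)).
  assert (Hstep : (b - a + (d - c) + 1) / INR N < dl).
  { apply Rmult_lt_reg_r with (/ (b - a + (d - c) + 1)). apply Rinv_0_lt_compat; lra.
    unfold Rdiv in HN |- *. rewrite Rmult_comm. rewrite <- Rmult_assoc.
    rewrite Rinv_l by lra. lra. }
  assert (Hdx : 0 <= (x - a) / INR N <= (b - a + (d - c) + 1) / INR N).
  { split. apply Rdiv_le_0_compat; lra. apply Rmult_le_compat_r. left; apply Rinv_0_lt_compat; auto. lra. }
  assert (Hdy : 0 <= (y - c) / INR N <= (b - a + (d - c) + 1) / INR N).
  { split. apply Rdiv_le_0_compat; lra. apply Rmult_le_compat_r. left; apply Rinv_0_lt_compat; auto. lra. }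
  assert (Hin : forall i, (i <= N)%nat -> a <= px i <= b /\ c <= py i <= d).
  { intros i Hi. apply le_INR in Hi. pose proof (pos_INR i).
    assert (Ha1 : INR i * ((x - a) / INR N) <= x - a).
    { replace (x - a) with (INR N * ((x - a) / INR N)) at 2 by (field; lra).
      apply Rmult_le_compat_r; lra. }
    assert (Hc1 : INR i * ((y - c) / INR N) <= y - c).
    { replace (y - c) with (INR N * ((y - c) / INR N)) at 2 by (field; lra).
      apply Rmult_le_compat_r; lra. }
    assert (0 <= INR i * ((x - a) / INR N)) by (apply Rmult_le_pos; lra).
    assert (0 <= INR i * ((y - c) / INR N)) by (apply Rmult_le_pos; lra).
    unfold px, py; lra. }
  assert (Hind : forall i, (i <= N)%nat -> Rabs (h (px i) (py i)) <= Rabs (h a c) + INR i).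
  { induction i; intros Hi.
    - unfold px, py; simpl. replace (a + 0 * ((x - a) / INR N)) with a by ring.
      replace (c + 0 * ((y - c) / INR N)) with c by ring. lra.
    - specialize (IHi ltac:(lia)).
      destruct (Hin i ltac:(lia)) as [H1 H2]. destruct (Hin (S i) Hi) as [H3 H4].
      assert (Hl : Rabs (h (px (S i)) (py (S i)) - h (px i) (py i)) < 1).
      { apply Hd; auto.
        - unfold px. rewrite S_INR. replace (a + (INR i + 1) * ((x - a) / INR N) - (a + INR i * ((x - a) / INR N))) with ((x - a) / INR N) by ring.
          rewrite Rabs_right by lra. lra.
        - unfold py. rewrite S_INR. replace (c + (INR i + 1) * ((y - c) / INR N) - (c + INR i * ((y - c) / INR N))) with ((y - c) / INR N) by ring.
          rewrite Rabs_right by lra. lra. }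
      rewrite S_INR. pose proof (Rabs_triang_inv (h (px (S i)) (py (S i))) (h (px i) (py i))). lra. }
  specialize (Hind N (le_n _)). unfold px, py in Hind.
  replace (a + INR N * ((x - a) / INR N)) with x in Hind by (field; lra).
  replace (c + INR N * ((y - c) / INR N)) with y in Hind by (field; lra). auto.
Qed.

Definition T (a c C : R) (h : R -> R -> R) (s t : R) : R :=
  C * RInt (fun r => RInt (fun w => h r w) c t) a s.

Fixpoint Titer (a c C : R) (M : nat) (h : R -> R -> R) : R -> R -> R :=
  match M with O => h | S M => T a c C (Titer a c C M h) end.

Lemma UC2_inner a b c d h t : a <= b -> c <= d -> UC2 a b c d h -> c <= t <= d ->
  UC1 a b (fun r => RInt (fun w => h r w) c t).
Proof.
  intros Hab Hcd H Ht eps Heps.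
  destruct (H (eps / (d - c + 1))) as [dl [Hdl Hd]]. apply Rdiv_lt_0_compat; lra.
  exists dl; split; auto. intros x u Hx Hu Hxu.
  rewrite <- RInt_minus_R.
  2,3: apply (UC1_ex_RInt c d); try apply (UC2_slice a b c d); auto; lra.
  eapply Rle_lt_trans. apply abs_RInt_le_const'.
  apply ex_RInt_minus_R; apply (UC1_ex_RInt c d); try apply (UC2_slice a b c d); auto; lra.
  intros z Hz. left. apply Hd; auto.
  rewrite Rmin_left, Rmax_right in Hz by lra. lra.
  rewrite Rmin_left, Rmax_right in Hz by lra. lra.
  rewrite Rminus_diag, Rabs_R0; auto.
  rewrite Rabs_right by lra.
  apply Rlt_le_trans with ((d - c + 1) * (eps / (d - c + 1))).
  apply Rmult_lt_compat_r. apply Rdiv_lt_0_compat; lra. lra.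
  right; field; lra.
Qed.

Lemma T_ex_inner a b c d h r t : a <= b -> c <= d -> UC2 a b c d h -> a <= r <= b -> c <= t <= d ->
  ex_RInt (fun w => h r w) c t.
Proof. intros. apply (UC1_ex_RInt c d); try apply (UC2_slice a b c d); auto; lra. Qed.

Lemma T_ex_outer a b c d h s t : a <= b -> c <= d -> UC2 a b c d h -> a <= s <= b -> c <= t <= d ->
  ex_RInt (fun r => RInt (fun w => h r w) c t) a s.
Proof. intros. apply (UC1_ex_RInt a b); try apply (UC2_inner a b c d); auto; lra. Qed.

Lemma T_UC2 a b c d C h : a <= b -> c <= d -> UC2 a b c d h -> UC2 a b c d (T a c C h).
Proof.
  intros Hab Hcd H. destruct (UC2_bounded a b c d h Hab Hcd H) as [M [HM0 HM]].
  intros eps Heps.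
  set (K := (Rabs C + 1) * (M + 1) * (b - a + (d - c) + 1)).
  assert (HK : 0 < K). { unfold K. pose proof (Rabs_pos C).
    apply Rmult_lt_0_compat; [apply Rmult_lt_0_compat|]; lra. }
  exists (eps / K). split. apply Rdiv_lt_0_compat; lra.
  intros x y u v Hx Hy Hu Hv Hux Hvy. unfold T.
  set (phi := fun t r => RInt (fun w => h r w) c t).
  change (Rabs (C * RInt (phi v) a u - C * RInt (phi y) a x) < eps).
  assert (Hex : forall t z, c <= t <= d -> a <= z <= b -> ex_RInt (phi t) a z).
  { intros t z Ht Hz. apply (T_ex_outer a b c d); auto. }
  assert (Hexz : forall t z1 z2, c <= t <= d -> a <= z1 <= b -> a <= z2 <= b -> ex_RInt (phi t) z1 z2).
  { intros t z1 z2 Ht Hz1 Hz2. apply (UC1_ex_RInt a b); try apply (UC2_inner a b c d); auto. }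
  rewrite <- (RInt_Chasles_R (phi v) a x u) by auto.
  replace (C * (RInt (phi v) a x + RInt (phi v) x u) - C * RInt (phi y) a x)
    with (C * (RInt (fun r => phi v r - phi y r) a x) + C * RInt (phi v) x u).
  2:{ rewrite RInt_minus_R by auto. ring. }
  assert (H1 : Rabs (RInt (fun r => phi v r - phi y r) a x) <= (b - a) * (M * Rabs (v - y))).
  { eapply Rle_trans. apply abs_RInt_le_const'.
    apply ex_RInt_minus_R; auto.
    intros z Hz. rewrite Rmin_left, Rmax_right in Hz by lra.
    unfold phi. rewrite <- (RInt_Chasles_R (fun w => h z w) c y v).
    unfold Rminus. rewrite Rplus_comm, <- Rplus_assoc, Rplus_opp_l, Rplus_0_l.
    eapply Rle_trans. apply abs_RInt_le_const'.
    apply (UC1_ex_RInt c d); try apply (UC2_slice a b c d); auto; lra.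
    intros w Hw. apply HM; try lra. split.
    apply Rle_trans with (Rmin y v). apply Rmin_glb; lra. lra.
    apply Rle_trans with (Rmax y v). lra. apply Rmax_lub; lra.
    rewrite Rmult_comm; right; auto.
    apply (UC1_ex_RInt c d); try apply (UC2_slice a b c d); auto; lra.
    apply (UC1_ex_RInt c d); try apply (UC2_slice a b c d); auto; lra.
    apply Rmult_le_compat_r. apply Rmult_le_pos; auto; apply Rabs_pos.
    rewrite Rabs_right; lra. }
  assert (H2 : Rabs (RInt (phi v) x u) <= Rabs (u - x) * ((d - c) * M)).
  { apply abs_RInt_le_const'. auto.
    intros z Hz. unfold phi. eapply Rle_trans. apply abs_RInt_le_const'.
    apply (T_ex_inner a b c d); auto.
    split. apply Rle_trans with (Rmin x u). apply Rmin_glb; lra. lra.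
    apply Rle_trans with (Rmax x u). lra. apply Rmax_lub; lra.
    intros w Hw. rewrite Rmin_left, Rmax_right in Hw by lra. apply HM; try lra.
    split. apply Rle_trans with (Rmin x u). apply Rmin_glb; lra. lra.
    apply Rle_trans with (Rmax x u). lra. apply Rmax_lub; lra.
    apply Rmult_le_compat_r; auto. rewrite Rabs_right; lra. }
  eapply Rle_lt_trans. apply Rabs_triang. rewrite !Rabs_mult.
  assert (HC : 0 <= Rabs C) by apply Rabs_pos.
  assert (Hd1 : Rabs (v - y) <= eps / K) by lra.
  assert (Hd2 : Rabs (u - x) <= eps / K) by lra.
  assert (E1 : Rabs C * Rabs (RInt (fun r => phi v r - phi y r) a x) <= Rabs C * ((b - a) * (M * (eps / K)))).
  { apply Rmult_le_compat_l; auto. eapply Rle_trans; [apply H1|].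
    apply Rmult_le_compat_l; [lra|]. apply Rmult_le_compat_l; auto. }
  assert (E2 : Rabs C * Rabs (RInt (phi v) x u) <= Rabs C * ((eps / K) * ((d - c) * M))).
  { apply Rmult_le_compat_l; auto. eapply Rle_trans; [apply H2|].
    apply Rmult_le_compat_r; auto. apply Rmult_le_pos; lra. }
  assert (E3 : Rabs C * ((b - a) * (M * (eps / K))) + Rabs C * ((eps / K) * ((d - c) * M))
     = (Rabs C * M * (b - a + (d - c))) * (eps / K)) by ring.
  assert (E4 : (Rabs C * M * (b - a + (d - c))) * (eps / K) < K * (eps / K)).
  { apply Rmult_lt_compat_r. apply Rdiv_lt_0_compat; lra. unfold K.
    assert (0 <= Rabs C * M) by (apply Rmult_le_pos; auto).
    assert (Rabs C * M < (Rabs C + 1) * (M + 1)) by nra.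
    assert (0 <= b - a + (d - c)) by lra.
    nra. }
  assert (E5 : K * (eps / K) = eps) by (field; lra).
  lra.
Qed.

Lemma T_ext a b c d C u v : (forall r w, a <= r <= b -> c <= w <= d -> u r w = v r w) ->
  forall s t, a <= s <= b -> c <= t <= d -> T a c C u s t = T a c C v s t.
Proof.
  intros H s t Hs Ht. unfold T. f_equal. apply RInt_ext. intros r Hr.
  rewrite Rmin_left, Rmax_right in Hr by lra.
  apply RInt_ext. intros w Hw. rewrite Rmin_left, Rmax_right in Hw by lra. apply H; lra.
Qed.

Lemma UC2_plus a b c d u v : UC2 a b c d u -> UC2 a b c d v -> UC2 a b c d (fun r w => u r w + v r w).
Proof.
  intros Hu Hv eps Heps. destruct (Hu (eps/2)) as [d1 [Hd1 H1]]. lra.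
  destruct (Hv (eps/2)) as [d2 [Hd2 H2]]. lra.
  exists (Rmin d1 d2). split. apply Rmin_glb_lt; auto.
  intros x y p q Hx Hy Hp Hq Hpx Hqy.
  pose proof (Rmin_l d1 d2). pose proof (Rmin_r d1 d2).
  specialize (H1 x y p q Hx Hy Hp Hq ltac:(lra) ltac:(lra)).
  specialize (H2 x y p q Hx Hy Hp Hq ltac:(lra) ltac:(lra)).
  replace (u p q + v p q - (u x y + v x y)) with ((u p q - u x y) + (v p q - v x y)) by ring.
  eapply Rle_lt_trans. apply Rabs_triang. lra.
Qed.

Lemma T_plus a b c d C u v : a <= b -> c <= d -> UC2 a b c d u -> UC2 a b c d v ->
  forall s t, a <= s <= b -> c <= t <= d ->
  T a c C (fun r w => u r w + v r w) s t = T a c C u s t + T a c C v s t.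
Proof.
  intros Hab Hcd Hu Hv s t Hs Ht. unfold T. rewrite <- Rmult_plus_distr_l. f_equal.
  rewrite <- RInt_plus_R by (apply (T_ex_outer a b c d); auto).
  apply RInt_ext. intros r Hr. rewrite Rmin_left, Rmax_right in Hr by lra.
  apply RInt_plus_R; apply (T_ex_inner a b c d); auto; lra.
Qed.

Lemma Tn_UC2 a b c d C M h : a <= b -> c <= d -> UC2 a b c d h -> UC2 a b c d (Titer a c C M h).
Proof. intros Hab Hcd H. induction M; simpl; auto. apply T_UC2; auto. Qed.

Lemma Tn_ext a b c d C M u v : (forall r w, a <= r <= b -> c <= w <= d -> u r w = v r w) ->
  forall s t, a <= s <= b -> c <= t <= d -> Titer a c C M u s t = Titer a c C M v s t.
Proof. intros H. induction M; simpl; auto. apply T_ext; auto. Qed.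

Lemma Tn_plus a b c d C M u v : a <= b -> c <= d -> UC2 a b c d u -> UC2 a b c d v ->
  forall s t, a <= s <= b -> c <= t <= d ->
  Titer a c C M (fun r w => u r w + v r w) s t = Titer a c C M u s t + Titer a c C M v s t.
Proof.
  intros Hab Hcd Hu Hv. induction M; simpl; auto.
  intros s t Hs Ht. rewrite (T_ext a b c d C _ (fun r w => Titer a c C M u r w + Titer a c C M v r w)); auto.
  apply (T_plus a b c d); auto; apply Tn_UC2; auto.
Qed.

Lemma Tn_T a c C M h : Titer a c C M (T a c C h) = Titer a c C (S M) h.
Proof. induction M; simpl; auto. rewrite IHM. reflexivity. Qed.

Lemma lsum_RInt (B : nat -> R) (j : nat -> nat) N c t :
  is_RInt (fun w => lsum (fun n => B n * (w - c) ^ (j n)) N) c t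
    (lsum (fun n => B n * ((t - c) ^ (S (j n)) / INR (S (j n)))) N).
Proof.
  induction N; simpl.
  - pose proof (@is_RInt_const R_NormedModule c t 0) as H.
    change (scal (t - c) 0) with ((t - c) * 0) in H. rewrite Rmult_0_r in H. exact H.
  - apply (@is_RInt_plus R_NormedModule _ _ c t _ _ IHN (is_RInt_cmono (B N) c t (j N))).
Qed.

Lemma poly_RInt (A : nat -> R) (i j : nat -> nat) N a c s t :
  (forall r, ex_RInt (fun w => lsum (fun n => A n * (r - a) ^ (i n) * (w - c) ^ (j n)) N) c t) /\
  is_RInt (fun r => RInt (fun w => lsum (fun n => A n * (r - a) ^ (i n) * (w - c) ^ (j n)) N) c t) a s
    (lsum (fun n => A n * ((s - a) ^ (S (i n)) / INR (S (i n))) * ((t - c) ^ (S (j n)) / INR (S (j n)))) N).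
Proof.
  split.
  - intros r. eexists. apply (lsum_RInt (fun n => A n * (r - a) ^ (i n)) j N c t).
  - replace (lsum (fun n => A n * ((s - a) ^ (S (i n)) / INR (S (i n))) * ((t - c) ^ (S (j n)) / INR (S (j n)))) N)
      with (lsum (fun n => (A n * ((t - c) ^ (S (j n)) / INR (S (j n)))) * ((s - a) ^ (S (i n)) / INR (S (i n)))) N)
      by (apply lsum_ext; intros; ring).
    eapply (@is_RInt_ext R_NormedModule (fun r => lsum (fun n => (A n * ((t - c) ^ (S (j n)) / INR (S (j n)))) * (r - a) ^ (i n)) N)).
    + intros r _. symmetry. rewrite (is_RInt_unique _ _ _ _ (lsum_RInt (fun n => A n * (r - a) ^ (i n)) j N c t)).
      apply lsum_ext; intros; ring.
    + eapply (@is_RInt_ext R_NormedModule).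
      2: apply (lsum_RInt (fun n => A n * ((t - c) ^ (S (j n)) / INR (S (j n)))) i N a s).
      intros; reflexivity.
Qed.

Lemma RInt_zero lo hi : RInt (fun _ => 0) lo hi = 0.
Proof.
  rewrite (@RInt_const R_CompleteNormedModule). unfold scal; simpl; unfold mult; simpl; ring.
Qed.

Definition wt (C x y : R) (m : nat) : R := Rabs C ^ m / INR (fact m) ^ 2 * x ^ m * y ^ m.

Lemma approx_ind a b c d C g (Q : nat -> R -> R -> R) eps :
  a <= b -> c <= d -> UC2 a b c d g ->
  (forall (m : nat) (r t : R), a <= r <= b -> c <= t <= d -> ex_RInt (fun w => Q m r w) c t) ->
  (forall (m : nat) (s t : R), a <= s <= b -> c <= t <= d -> ex_RInt (fun r => RInt (fun w => Q m r w) c t) a s) ->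
  (forall (m : nat) (s t : R), a <= s <= b -> c <= t <= d ->
     Q (S m) s t = C * RInt (fun r => RInt (fun w => Q m r w) c t) a s) ->
  (forall r w, a <= r <= b -> c <= w <= d -> Rabs (g r w - Q O r w) <= eps) ->
  forall (m : nat) (s t : R), a <= s <= b -> c <= t <= d ->
    Rabs (Titer a c C m g s t - Q m s t) <= eps * wt C (s - a) (t - c) m.
Proof.
  intros Hab Hcd Hg HQ1 HQ2 HQ3 H0. induction m; intros s t Hs Ht.
  - simpl. unfold wt; simpl. eapply Rle_trans; [apply H0; auto| right; field].
  - change (Titer a c C (S m) g) with (T a c C (Titer a c C m g)). rewrite (HQ3 m s t Hs Ht). unfold T.
    set (P := Titer a c C m g).
    assert (HP : UC2 a b c d P) by (apply Tn_UC2; auto).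
    rewrite <- Rmult_minus_distr_l.
    rewrite <- RInt_minus_R.
    2: apply (T_ex_outer a b c d); auto.
    2: apply HQ2; auto.
    assert (Hin : forall r, a <= r <= s -> ex_RInt (fun w => P r w - Q m r w) c t).
    { intros r Hr. apply ex_RInt_minus_R. apply (T_ex_inner a b c d); auto; lra. apply HQ1; auto; lra. }
    rewrite (RInt_ext _ (fun r => RInt (fun w => P r w - Q m r w) c t)).
    2:{ intros r Hr. rewrite Rmin_left, Rmax_right in Hr by lra.
        rewrite RInt_minus_R; auto. apply (T_ex_inner a b c d); auto; lra. apply HQ1; auto; lra. }
    rewrite Rabs_mult.
    assert (Hout : ex_RInt (fun r => RInt (fun w => P r w - Q m r w) c t) a s).
    { eapply (@ex_RInt_ext R_NormedModule (fun r => RInt (fun w => P r w) c t - RInt (fun w => Q m r w) c t)).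
      intros r Hr. rewrite Rmin_left, Rmax_right in Hr by lra.
      rewrite RInt_minus_R; auto. apply (T_ex_inner a b c d); auto; lra. apply HQ1; auto; lra.
      apply ex_RInt_minus_R. apply (T_ex_outer a b c d); auto. apply HQ2; auto. }
    pose proof (bound_lemma (fun r w => P r w - Q m r w) a s c t
                  (eps * (Rabs C ^ m / INR (fact m) ^ 2)) m ltac:(lra) ltac:(lra) Hin Hout) as HB.
    assert (Hfm := INR_fact_lt_0 m).
    eapply Rle_trans. apply Rmult_le_compat_l. apply Rabs_pos. apply HB.
    + intros r w Hr Hw. eapply Rle_trans. apply IHm; lra. unfold wt. right; ring.
    + unfold wt. right. rewrite fact_simpl, mult_INR. rewrite <- !tech_pow_Rmult. field.
      split. lra. apply not_0_INR; lia.
Qed.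

Definition Acoef (p : nat -> R) (C : R) (m n : nat) : R :=
  p n * C ^ m * INR (fact n) / (INR (fact m) * INR (fact (n + m))).

Lemma gterm_form p C x y n m : gterm p C x y n m = Acoef p C m n * x ^ (n + m) * y ^ m.
Proof.
  unfold gterm, Acoef. rewrite Rpow_mult_distr. field.
  split; apply INR_fact_neq_0.
Qed.

Lemma gterm_step p C x y n m :
  C * (Acoef p C m n * (x ^ (S (n + m)) / INR (S (n + m))) * (y ^ (S m) / INR (S m)))
  = gterm p C x y n (S m).
Proof.
  unfold gterm, Acoef. rewrite Nat.add_succ_r. rewrite !fact_simpl, !mult_INR.
  rewrite Rpow_mult_distr. rewrite <- !tech_pow_Rmult.
  field. repeat split; try apply INR_fact_neq_0; apply not_0_INR; lia.
Qed.

Lemma lsum_scal (K : R) f N : K * lsum f N = lsum (fun n => K * f n) N.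
Proof. induction N; simpl. ring. rewrite <- IHN. ring. Qed.

Lemma Q_props (Q : R -> R -> R) A i j N a c s t :
  (forall r w, Q r w = lsum (fun n => A n * (r - a) ^ (i n) * (w - c) ^ (j n)) N) ->
  (forall r, ex_RInt (fun w => Q r w) c t) /\
  is_RInt (fun r => RInt (fun w => Q r w) c t) a s
    (lsum (fun n => A n * ((s - a) ^ (S (i n)) / INR (S (i n))) * ((t - c) ^ (S (j n)) / INR (S (j n)))) N).
Proof.
  intros HQ. destruct (poly_RInt A i j N a c s t) as [H1 H2]. split.
  - intros r. eapply (@ex_RInt_ext R_NormedModule). 2: apply H1. intros; simpl. rewrite HQ; auto.
  - eapply (@is_RInt_ext R_NormedModule). 2: apply H2. intros r _. apply RInt_ext.
    intros; rewrite HQ; auto.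
Qed.

Definition Qs (p : nat -> R) (C a c : R) (N m : nat) (r w : R) : R :=
  lsum (fun n => gterm p C (r - a) (w - c) (S n) m) N.

Definition Qt (q : nat -> R) (C a c : R) (N m : nat) (r w : R) : R :=
  lsum (fun n => gterm q C (w - c) (r - a) n m) (S N).

Lemma Qs_props p C a c N m s t :
  (forall r, ex_RInt (fun w => Qs p C a c N m r w) c t) /\
  ex_RInt (fun r => RInt (fun w => Qs p C a c N m r w) c t) a s /\
  Qs p C a c N (S m) s t = C * RInt (fun r => RInt (fun w => Qs p C a c N m r w) c t) a s.
Proof.
  destruct (Q_props (Qs p C a c N m) (fun n => Acoef p C m (S n)) (fun n => (S n + m)%nat) (fun _ => m) N a c s t)
    as [H1 H2].
  { intros r w. unfold Qs. apply lsum_ext. intros n _. apply gterm_form. }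
  split; auto. split. eexists; eauto.
  rewrite (is_RInt_unique _ _ _ _ H2). rewrite lsum_scal. unfold Qs. apply lsum_ext.
  intros n _. rewrite <- gterm_step. reflexivity.
Qed.

Lemma Qt_props q C a c N m s t :
  (forall r, ex_RInt (fun w => Qt q C a c N m r w) c t) /\
  ex_RInt (fun r => RInt (fun w => Qt q C a c N m r w) c t) a s /\
  Qt q C a c N (S m) s t = C * RInt (fun r => RInt (fun w => Qt q C a c N m r w) c t) a s.
Proof.
  destruct (Q_props (Qt q C a c N m) (fun n => Acoef q C m n) (fun _ => m) (fun n => (n + m)%nat) (S N) a c s t)
    as [H1 H2].
  { intros r w. unfold Qt. apply lsum_ext. intros n _. rewrite gterm_form. ring. }
  split; auto. split. eexists; eauto.
  rewrite (is_RInt_unique _ _ _ _ H2). rewrite lsum_scal. unfold Qt. apply lsum_ext.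
  intros n _. rewrite <- gterm_step. f_equal. ring.
Qed.

Lemma gterm_ex p C x y n : 0 <= x -> 0 <= y -> ex_series (gterm p C x y n).
Proof.
  intros Hx Hy.
  apply ex_series_le_R with (b := fun m => (Rabs (p n) * x ^ n) * ((Rabs C * y * x) ^ m / INR (fact m))).
  2: apply (ex_series_scal_l (Rabs (p n) * x ^ n) _ (exp_series (Rabs C * y * x))).
  intros m. unfold gterm.
  assert (Hf : INR (fact n) <= INR (fact (n + m))) by (apply le_INR, fact_le; lia).
  pose proof (INR_fact_lt_0 n). pose proof (INR_fact_lt_0 m). pose proof (INR_fact_lt_0 (n + m)).
  unfold Rdiv. rewrite !Rabs_mult. rewrite !Rabs_inv.
  rewrite !(Rabs_right (INR _)) by lra.
  rewrite <- !RPow_abs. rewrite Rabs_mult. rewrite (Rabs_right x), (Rabs_right y) by lra.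
  rewrite pow_add, !Rpow_mult_distr.
  assert (0 <= INR (fact n) * / INR (fact (n + m)) <= 1).
  { split. apply Rmult_le_pos; [lra| left; apply Rinv_0_lt_compat; lra].
    apply Rmult_le_reg_r with (INR (fact (n + m))); auto.
    rewrite Rmult_assoc, Rinv_l by lra. lra. }
  assert (0 <= Rabs (p n) * (Rabs C ^ m * y ^ m) * (x ^ n * x ^ m) * / INR (fact m)).
  { repeat apply Rmult_le_pos; try apply Rabs_pos; try apply pow_le; try apply Rabs_pos; auto.
    left; apply Rinv_0_lt_compat; lra. }
  replace (Rabs (p n) * x ^ n * (Rabs C ^ m * y ^ m * x ^ m * / INR (fact m)))
    with (Rabs (p n) * (Rabs C ^ m * y ^ m) * (x ^ n * x ^ m) * / INR (fact m) * 1) by ring.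
  rewrite !Rmult_assoc. rewrite <- !Rmult_assoc with (r1 := Rabs (p n)).
  nra.
Qed.

Lemma cont_2d_of_cont (g : R -> R) x y : continuous g x -> continuity_2d_pt (fun u _ => g u) x y.
Proof.
  intros H. apply (proj2 (continuity_pt_filterlim _ _)) in H.
  intros eps. destruct (H eps (cond_pos eps)) as [alp [Halp Hd]].
  exists (mkposreal alp Halp). intros u v Hu _. simpl in *.
  destruct (Req_dec u x) as [->|Hux].
  - rewrite Rminus_diag, Rabs_R0. apply cond_pos.
  - apply (Hd u). split. split. exact I. auto. auto.
Qed.

Lemma UC1_of_cont g lo hi : (forall x, continuous g x) -> UC1 lo hi g.
Proof.
  intros H eps Heps.
  destruct (uniform_continuity_2d (fun u _ => g u) lo hi 0 0) with (eps := mkposreal eps Heps)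
    as [dl Hd].
  { intros; apply cont_2d_of_cont; auto. }
  exists dl; split. apply cond_pos.
  intros x u Hx Hu Hxu. apply (Hd x 0 u 0); auto; try lra. rewrite Rminus_diag, Rabs_R0; apply cond_pos.
Qed.

Lemma partial_ex_derive p a N x : ex_derive (pser_partial p a N) x.
Proof.
  unfold pser_partial. induction N; simpl.
  - auto_derive. auto.
  - apply (@ex_derive_plus R_AbsRing R_NormedModule); auto. auto_derive. auto.
Qed.

Lemma unif_UC1 (u : nat -> R -> R) f lo hi :
  (forall n, UC1 lo hi (u n)) -> unif_cv_on u f lo hi -> UC1 lo hi f.
Proof.
  intros Hu Hcv eps Heps.
  destruct (Hcv (eps / 3)) as [N HN]. lra.
  destruct (Hu N (eps / 3)) as [dl [Hdl Hd]]. lra.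
  exists dl; split; auto. intros x v Hx Hv Hxv.
  pose proof (HN N x (le_n _) Hx) as H1. pose proof (HN N v (le_n _) Hv) as H2.
  pose proof (Hd x v Hx Hv Hxv) as H3.
  replace (f v - f x) with (- (u N v - f v) + (u N v - u N x) + (u N x - f x)) by ring.
  eapply Rle_lt_trans. apply Rabs_triang. eapply Rle_lt_trans. apply Rplus_le_compat_r. apply Rabs_triang.
  rewrite Rabs_Ropp. lra.
Qed.

Lemma UC2_r a b c d g K : UC1 a b g -> UC2 a b c d (fun r w => g r - K).
Proof.
  intros H eps Heps. destruct (H eps Heps) as [dl [Hdl Hd]]. exists dl; split; auto.
  intros x y u v Hx Hy Hu Hv Hux Hvy. replace (g u - K - (g x - K)) with (g u - g x) by ring. auto.
Qed.

Lemma UC2_w a b c d g : UC1 c d g -> UC2 a b c d (fun r w => g w).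
Proof.
  intros H eps Heps. destruct (H eps Heps) as [dl [Hdl Hd]]. exists dl; split; auto.
Qed.

Lemma UC2_of_cont a b c d k : a <= b -> c <= d -> cont_on_rect k a b c d -> UC2 a b c d k.
Proof.
  intros Hab Hcd Hk eps Heps.
  set (kc := fun u v => k (clamp a b u) (clamp c d v)).
  destruct (uniform_continuity_2d kc a b c d) with (eps := mkposreal eps Heps) as [dl Hd].
  { intros x y Hx Hy e. destruct (Hk x y Hx Hy e (cond_pos e)) as [de [Hde Hd]].
    exists (mkposreal de Hde). intros u v Hu Hv. simpl in *. unfold kc.
    rewrite (clamp_id a b x), (clamp_id c d y) by auto.
    apply Hd; try apply clamp_in; auto.
    rewrite <- (clamp_id a b x) by auto. eapply Rle_lt_trans. apply clamp_lip; auto. auto.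
    rewrite <- (clamp_id c d y) by auto. eapply Rle_lt_trans. apply clamp_lip; auto. auto. }
  exists dl. split. apply cond_pos. intros x y u v Hx Hy Hu Hv Hux Hvy.
  specialize (Hd x y u v Hx Hy Hu Hv Hux Hvy). unfold kc in Hd.
  rewrite !clamp_id in Hd by auto. auto.
Qed.

Lemma pser_center p a N : pser_partial p a N a = p O.
Proof.
  unfold pser_partial. induction N; simpl. ring. rewrite IHN. rewrite Rminus_diag. ring.
Qed.

Lemma gterm_0 p C x y n : gterm p C x y n O = p n * x ^ n.
Proof. unfold gterm. rewrite Nat.add_0_r. simpl. field. apply INR_fact_neq_0. Qed.

Lemma Qs0 p C a c N r w : Qs p C a c N O r w = pser_partial p a N r - p O.
Proof.
  unfold Qs, pser_partial. induction N.
  - simpl. ring.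
  - cbn [lsum sum_f_R0]. rewrite IHN, gterm_0. ring.
Qed.

Lemma Qt0 q C a c N r w : Qt q C a c N O r w = pser_partial q c N w.
Proof.
  unfold Qt, pser_partial. induction N.
  - cbn [lsum sum_f_R0]. rewrite gterm_0. ring.
  - cbn [lsum sum_f_R0] in *. rewrite <- IHN, (gterm_0 q C _ _ (S N)). ring.
Qed.

Lemma gterm0_sym p q C x y m : p O = q O -> gterm p C x y O m = gterm q C y x O m.
Proof. intros H. unfold gterm. simpl. rewrite H, !Rpow_mult_distr. unfold Rdiv. ring. Qed.

Lemma wt_ex C x y : 0 <= x -> 0 <= y -> ex_series (wt C x y).
Proof.
  intros Hx Hy. apply ex_series_le_R with (b := fun m => (Rabs C * x * y) ^ m / INR (fact m)).
  2: apply exp_series.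
  intros m. unfold wt. pose proof (INR_fact_lt_0 m).
  assert (1 <= INR (fact m)). { replace 1 with (INR 1) by auto. apply le_INR. pose proof (lt_O_fact m). lia. }
  assert (0 <= Rabs C ^ m * x ^ m * y ^ m).
  { repeat apply Rmult_le_pos; apply pow_le; auto; apply Rabs_pos. }
  rewrite !Rpow_mult_distr.
  replace (Rabs C ^ m / INR (fact m) ^ 2 * x ^ m * y ^ m) with ((Rabs C ^ m * x ^ m * y ^ m) / INR (fact m) ^ 2) by (field; lra).
  rewrite Rabs_right.
  2:{ apply Rle_ge, Rdiv_le_0_compat; auto. apply pow_lt; lra. }
  unfold Rdiv. apply Rmult_le_compat_l; auto.
  apply Rinv_le_contravar. lra. simpl. nra.
Qed.

Lemma wt_pos C x y m : 0 <= x -> 0 <= y -> 0 <= wt C x y m.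
Proof.
  intros. unfold wt, Rdiv. pose proof (INR_fact_lt_0 m).
  repeat apply Rmult_le_pos; try apply pow_le; auto; try apply Rabs_pos.
  left; apply Rinv_0_lt_compat, pow_lt; lra.
Qed.

Lemma is_series_eq_val (u : nat -> R) (l l' : R) : l = l' -> is_series u l -> is_series u l'.
Proof. intros ->; auto. Qed.

Theorem mainTheorem6 (a b c d C : R) (p q : nat -> R) (sigma tau : R -> R)
  (k : R -> R -> R) :
  a < b -> c < d -> C <> 0 -> p 0%nat = q 0%nat ->
  unif_cv_on (pser_partial p a) sigma a b ->
  unif_cv_on (pser_partial q c) tau c d ->
  cont_on_rect k a b c d ->
  (forall s t, a <= s <= b -> c <= t <= d ->
     k s t = sigma s + tau t - sigma a
             + C * RInt (fun r => RInt (fun w => k r w) c t) a s) ->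
  forall s t, a <= s <= b -> c <= t <= d ->
    (forall n, ex_series (gterm p C (s - a) (t - c) n)) /\
    (forall n, ex_series (gterm q C (t - c) (s - a) n)) /\
    (exists SP SQ : R,
       is_series (fun n => Series (gterm p C (s - a) (t - c) (S n))) SP /\
       is_series (fun n => Series (gterm q C (t - c) (s - a) n)) SQ /\
       k s t = SP + SQ) /\
    (exists SP SQ : R,
       is_series (fun n => Series (gterm p C (s - a) (t - c) n)) SP /\
       is_series (fun n => Series (gterm q C (t - c) (s - a) (S n))) SQ /\
       k s t = SP + SQ).
Proof.
  intros Hab0 Hcd0 HC Hpq Hsig Htau Hk Heq s t Hs Ht.
  assert (Hab : a <= b) by lra. assert (Hcd : c <= d) by lra.
  assert (Hx : 0 <= s - a) by lra. assert (Hy : 0 <= t - c) by lra.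
  assert (Hsa : sigma a = p O).
  { destruct (Req_dec (sigma a) (p O)) as [E|E]; auto. exfalso.
    destruct (Hsig (Rabs (p O - sigma a))) as [N HN].
    { apply Rabs_pos_lt. intros E'; apply E; lra. }
    specialize (HN N a (le_n _) ltac:(lra)). rewrite pser_center in HN. lra. }
  assert (UCs : UC1 a b sigma).
  { apply (unif_UC1 (pser_partial p a)); auto. intros n. apply UC1_of_cont.
    intros z. apply cont_of_deriv, partial_ex_derive. }
  assert (UCt : UC1 c d tau).
  { apply (unif_UC1 (pser_partial q c)); auto. intros n. apply UC1_of_cont.
    intros z. apply cont_of_deriv, partial_ex_derive. }
  set (gs := fun r w : R => sigma r - p O).
  set (gt := fun r w : R => tau w).
  assert (UCgs : UC2 a b c d gs) by (apply UC2_r; auto).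
  assert (UCgt : UC2 a b c d gt) by (apply UC2_w; auto).
  assert (UCk : UC2 a b c d k) by (apply UC2_of_cont; auto).
  assert (UCTk : UC2 a b c d (T a c C k)) by (apply T_UC2; auto).
  assert (UCg : UC2 a b c d (fun r w => gs r w + gt r w)) by (apply UC2_plus; auto).
  assert (Hdec : forall M r w, a <= r <= b -> c <= w <= d ->
     Titer a c C M k r w = Titer a c C M gs r w + Titer a c C M gt r w + Titer a c C (S M) k r w).
  { intros M r w Hr Hw.
    rewrite (Tn_ext a b c d C M k (fun r w => (fun r w => gs r w + gt r w) r w + T a c C k r w)); auto.
    2:{ intros r0 w0 Hr0 Hw0. rewrite Heq by auto. unfold gs, gt, T. rewrite Hsa. ring. }
    rewrite (Tn_plus a b c d C M (fun r w => gs r w + gt r w) (T a c C k)); auto.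
    rewrite (Tn_plus a b c d C M gs gt); auto.
    rewrite Tn_T. reflexivity. }
  assert (Hpic : forall M, k s t = lsum (fun j => Titer a c C j gs s t + Titer a c C j gt s t) M
                                  + Titer a c C M k s t).
  { induction M. simpl. ring. rewrite IHM, Hdec by auto. simpl lsum. ring. }
  destruct (UC2_bounded a b c d k Hab Hcd UCk) as [Mk [HMk0 HMk]].
  assert (Hrem : forall M, Rabs (Titer a c C M k s t) <= Mk * wt C (s - a) (t - c) M).
  { intros M. replace (Titer a c C M k s t) with (Titer a c C M k s t - (fun _ _ _ => 0) M s t) by (simpl; ring).
    apply (approx_ind a b c d C k (fun _ _ _ => 0)); auto.
    - intros. apply (@ex_RInt_const R_NormedModule).
    - intros. eapply (@ex_RInt_ext R_NormedModule (fun _ => 0)).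
      intros; rewrite RInt_zero; auto. apply (@ex_RInt_const R_NormedModule).
    - intros. rewrite (RInt_ext _ (fun _ => 0)). rewrite RInt_zero. ring.
      intros; apply RInt_zero.
    - intros. rewrite Rminus_0_r. auto. }
  set (Gs := fun m => Titer a c C m gs s t).
  set (Gt := fun m => Titer a c C m gt s t).
  assert (HW := wt_ex C (s - a) (t - c) Hx Hy).
  assert (HP : is_series (fun j => Gs j + Gt j) (k s t)).
  { apply is_series_Reals. intros eps Heps.
    pose proof (ex_series_lim_0 _ HW) as Hl. apply is_lim_seq_Reals in Hl.
    destruct (Hl (eps / (Mk + 1))) as [N HN]. apply Rdiv_lt_0_compat; lra.
    exists N. intros n Hn. unfold R_dist. rewrite lsum_sum_f.
    rewrite (Hpic (S n)). unfold Gs, Gt.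
    replace (lsum (fun j => Titer a c C j gs s t + Titer a c C j gt s t) (S n) -
             (lsum (fun j => Titer a c C j gs s t + Titer a c C j gt s t) (S n) + Titer a c C (S n) k s t))
      with (- Titer a c C (S n) k s t) by ring.
    rewrite Rabs_Ropp. eapply Rle_lt_trans. apply Hrem.
    specialize (HN (S n) ltac:(lia)). unfold R_dist in HN. rewrite Rminus_0_r in HN.
    rewrite Rabs_right in HN by (apply Rle_ge, wt_pos; auto).
    apply Rle_lt_trans with (Mk * (eps / (Mk + 1))).
    apply Rmult_le_compat_l; lra.
    apply Rlt_le_trans with ((Mk + 1) * (eps / (Mk + 1))).
    apply Rmult_lt_compat_r. apply Rdiv_lt_0_compat; lra. lra.
    right; field; lra. }
  destruct (swap_lemma (fun n m => gterm p C (s - a) (t - c) (S n) m) Gs (wt C (s - a) (t - c)))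
    as [HGs HSs].
  { intros; apply gterm_ex; auto. }
  { auto. }
  { intros eps Heps. destruct (Hsig eps Heps) as [N0 HN0]. exists N0. intros N m HN.
    destruct (Qs_props p C a c N m s t) as [_ _].
    apply (approx_ind a b c d C gs (Qs p C a c N)); auto.
    - intros m0 r t0 Hr Ht0. apply (Qs_props p C a c N m0 r t0).
    - intros m0 s0 t0 Hs0 Ht0. apply (Qs_props p C a c N m0 s0 t0).
    - intros m0 s0 t0 Hs0 Ht0. apply (Qs_props p C a c N m0 s0 t0).
    - intros r w Hr Hw. rewrite Qs0. unfold gs.
      replace (sigma r - p O - (pser_partial p a N r - p O)) with (- (pser_partial p a N r - sigma r)) by ring.
      rewrite Rabs_Ropp. left. apply HN0; auto. }
  destruct (swap_lemma (fun n m => gterm q C (t - c) (s - a) n m) Gt (wt C (s - a) (t - c)))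
    as [HGt HSt].
  { intros; apply gterm_ex; auto. }
  { auto. }
  { intros eps Heps. destruct (Htau eps Heps) as [N0 HN0]. exists (S N0). intros N m HN.
    destruct N as [|N']. lia.
    apply (approx_ind a b c d C gt (Qt q C a c N')); auto.
    - intros m0 r t0 Hr Ht0. apply (Qt_props q C a c N' m0 r t0).
    - intros m0 s0 t0 Hs0 Ht0. apply (Qt_props q C a c N' m0 s0 t0).
    - intros m0 s0 t0 Hs0 Ht0. apply (Qt_props q C a c N' m0 s0 t0).
    - intros r w Hr Hw. rewrite Qt0. unfold gt. rewrite Rabs_minus_sym. left. apply HN0; auto; lia. }
  assert (Hkst : k s t = Series Gs + Series Gt).
  { symmetry. rewrite <- (is_series_unique _ _ HP). rewrite Series_plus; auto. }
  assert (HE : Series (gterm p C (s - a) (t - c) O) = Series (gterm q C (t - c) (s - a) O)).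
  { apply Series_ext. intros; apply gterm0_sym; auto. }
  split; [intros; apply gterm_ex; auto|].
  split; [intros; apply gterm_ex; auto|].
  split.
  - exists (Series Gs), (Series Gt). auto.
  - exists (Series Gs + Series (gterm p C (s - a) (t - c) O)),
           (Series Gt - Series (gterm q C (t - c) (s - a) O)).
    split; [|split].
    + apply is_series_decr_1.
      eapply is_series_eq_val; [|exact HSs]. unfold plus, opp; simpl; ring.
    + apply (@is_series_incr_1 R_AbsRing R_NormedModule (fun n => Series (gterm q C (t - c) (s - a) n)) (Series Gt - Series (gterm q C (t - c) (s - a) 0))).
      eapply is_series_eq_val; [|exact HSt]. unfold plus; simpl; ring.
    + rewrite Hkst, HE. ring.
Qed.
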